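(* Let $V$, $P$ and $\hat v_h^N$ be as in the context, fix an integer $N\ge0$, and let $g_h^N(x)=H_p((\hat v_h^N)'(x),x)=P+(\hat v_h^N)'(x)$. Then (for all sufficiently small $h>0$) there exists a periodic nonnegative probability density $\sigma_h^N$ on $\mathbb{T}$ solving $$(g_h^N(x)\,\sigma_h^N(x))'+h\,(\sigma_h^N)''(x)=0,$$ and there exist constants $k,K>0$, independent of $h$, such that $k\le\sigma_h^N(x)\le K$ for all $x\in\mathbb{T}$.
   Context: $\mathbb{T}=\mathbb{R}/\mathbb{Z}\cong[-\tfrac12,\tfrac12)$, $H(p,x)=\tfrac12(P+p)^2+V(x)$. $V:\mathbb{T}\to\mathbb{R}$ is smooth, symmetric, with a unique non-degenerate minimum at $0$. $\overline H(P)$ is the effective Hamiltonian: the unique constant $c$ for which $\tfrac12(P+\phi')^2+V=c$ has a periodic viscosity solution; $P_{crit}=\inf\{P:\overline H(P)>\min\overline H\}$, and $P>P_{crit}$ is fixed, so that $\overline H(P)>\max V$. Put $p^+(x)=\sqrt{2(\overline H(P)-V(x))}>0$ and $\sigma_0=c/p^+$ with $\int_{\mathbb{T}}\sigma_0=1$. Define $\overline H_0=\overline H(P)$, $v_0(x)=\int_{-1/2}^x p^+(s)ds-P(x+\tfrac12)$, and inductively for $j\ge1$: $\overline H_j=\int_{\mathbb{T}}\big[-\tfrac12 v_{j-1}''+\tfrac12\sum_{i=1}^{j-1}v_i'v_{j-i}'\big]\sigma_0\,dx$, and $v_j$ a smooth periodic solution (unique up to additive constant) of $-\tfrac12v_{j-1}''+p^+v_j'+\tfrac12\sum_{i=1}^{j-1}v_i'v_{j-i}'=\overline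 H_j$. Set $\hat v_h^N=\sum_{j=0}^N h^jv_j$. *)

(* Defs.v *)
From Stdlib Require Import Reals.
From Coquelicot Require Import Coquelicot.
Open Scope R_scope.

Fixpoint sumR (f : nat -> R) (n : nat) : R :=
  match n with O => 0 | S m => sumR f m + f m end.

Definition smooth (f : R -> R) : Prop := forall (n : nat) (x : R), ex_derive_n f n x.
Definition periodic1 (f : R -> R) : Prop := forall x, f (x + 1) = f x.

Definition admissible_potential (V : R -> R) : Prop :=
  smooth V /\ periodic1 V /\ (forall x, V (- x) = V x) /\
  (forall x, V 0 <= V x) /\
  (forall x, V x = V 0 -> exists k : Z, x = IZR k) /\
  Derive_n V 2 0 > 0.

Definition C1 (psi : R -> R) : Prop :=
  (forall x, ex_derive psi x) /\ (forall x, continuous (Derive psi) x).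

Definition visc_sol (V : R -> R) (P c : R) (phi : R -> R) : Prop :=
  (forall x, continuous phi x) /\ periodic1 phi /\
  (forall psi x0, C1 psi ->
     (exists d, d > 0 /\ forall y, Rabs (y - x0) < d ->
        phi y - psi y <= phi x0 - psi x0) ->
     / 2 * (P + Derive psi x0) ^ 2 + V x0 <= c) /\
  (forall psi x0, C1 psi ->
     (exists d, d > 0 /\ forall y, Rabs (y - x0) < d ->
        phi y - psi y >= phi x0 - psi x0) ->
     / 2 * (P + Derive psi x0) ^ 2 + V x0 >= c).

Definition is_Hbar (V : R -> R) (P c : R) : Prop :=
  exists phi, visc_sol V P c phi.

Definition pplus (V : R -> R) (c : R) (x : R) : R := sqrt (2 * (c - V x)).

Definition sigma0 (V : R -> R) (c : R) (x : R) : R :=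
  / pplus V c x / RInt (fun y => / pplus V c y) (-(1/2)) (1/2).

Definition v0 (V : R -> R) (P c : R) (x : R) : R :=
  RInt (pplus V c) (-(1/2)) x - P * (x + 1/2).

Definition conv (v : nat -> R -> R) (j : nat) (x : R) : R :=
  sumR (fun k => Derive (v (S k)) x * Derive (v (j - S k)%nat) x) (j - 1).

Definition Hbar_j (V : R -> R) (c : R) (v : nat -> R -> R) (j : nat) : R :=
  RInt (fun x => (- / 2 * Derive_n (v (j - 1)%nat) 2 x + / 2 * conv v j x)
                  * sigma0 V c x) (-(1/2)) (1/2).

Definition expansion_family (V : R -> R) (P c : R) (v : nat -> R -> R) : Prop :=
  v O = v0 V P c /\
  forall j : nat, (1 <= j)%nat ->
    smooth (v j) /\ periodic1 (v j) /\
    forall x, - / 2 * Derive_n (v (j - 1)%nat) 2 x + pplus V c x * Derive (v j) x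
              + / 2 * conv v j x = Hbar_j V c v j.

Definition gN (P : R) (v : nat -> R -> R) (N : nat) (h x : R) : R :=
  P + sumR (fun j => h ^ j * Derive (v j) x) (S N).

(* Main.v *)
Require Import Defs.
From Stdlib Require Import Reals Lra Lia ZArith.
From Coquelicot Require Import Coquelicot.
Open Scope R_scope.

Lemma ex_RInt_cont (f : R -> R) a b : (forall x, continuous f x) -> ex_RInt f a b.
Proof. intros H; apply (ex_RInt_continuous (V:=R_CompleteNormedModule)); intros; apply H. Qed.

Lemma deriv_RInt (f : R -> R) a x : (forall x, continuous f x) -> is_derive (RInt f a) x (f x).
Proof.
  intros H. apply is_derive_RInt with (a:=a).
  apply filter_forall => y. apply (RInt_correct (V:=R_CompleteNormedModule)), ex_RInt_cont, H. apply H.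
Qed.

Definition GG (g : R -> R) x := RInt g 0 x.
Definition FF g h y := exp (GG g y / h).
Definition II g h x := RInt (FF g h) (x-1) x.
Definition rho g h x := exp (- (GG g x) / h) * II g h x.

Lemma L1 g x (gc : forall x, continuous g x) : is_derive (GG g) x (g x).
Proof. apply deriv_RInt, gc. Qed.

Lemma L2 g x (gc : forall x, continuous g x) (gp : periodic1 g) : GG g (x+1) = GG g x + GG g 1.
Proof.
  unfold GG.
  rewrite <- (RInt_Chasles g 0 1 (x+1)); try apply ex_RInt_cont, gc.
  assert (RInt g 1 (x+1) = RInt g 0 x).
  { replace 1 with (1*0+1) at 1 by ring. replace (x+1) with (1*x+1) by ring.
    rewrite <- RInt_comp_lin. 2: apply ex_RInt_cont, gc.
    apply RInt_ext. intros y _. unfold scal; simpl; unfold mult; simpl. replace (1*y+1) with (y+1) by ring. rewrite gp; ring. }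
  rewrite H. unfold plus; simpl. ring.
Qed.

Lemma L3 g h x (gc : forall x, continuous g x) (hpos : 0 < h) : is_derive (FF g h) x (g x / h * FF g h x).
Proof.
  replace (g x / h * FF g h x) with (scal (g x) (/h * exp (GG g x / h))).
  2:{ unfold FF, scal; simpl; unfold mult; simpl. field. lra. }
  unfold FF.
  apply (is_derive_comp (fun u => exp (u / h)) (GG g)).
  2: exact (L1 g x gc).
  auto_derive. lra. unfold Rdiv; ring.
Qed.

Lemma L3' g h x (gc : forall x, continuous g x) (hpos : 0 < h) : is_derive (fun y => exp (- GG g y / h)) x (- g x / h * exp (- GG g x / h)).
Proof.
  replace (- g x / h * exp (- GG g x / h)) with (scal (g x) (-/h * exp (- GG g x / h))).
  2:{ unfold scal; simpl; unfold mult; simpl. field. lra. }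
  apply (is_derive_comp (fun u => exp (- u / h)) (GG g)).
  2: exact (L1 g x gc).
  auto_derive. lra. unfold Rdiv; ring.
Qed.

Lemma FFc g h (gc : forall x, continuous g x) (hpos : 0 < h) x : continuous (FF g h) x.
Proof. apply (ex_derive_continuous (K:=R_AbsRing) (V:=R_NormedModule)). eexists. apply L3; auto. Qed.

Lemma L4 g h x (gc : forall x, continuous g x) (hpos : 0 < h) :
  II g h x = RInt (FF g h) 0 x - RInt (FF g h) 0 (x-1).
Proof.
  unfold II. rewrite <- (RInt_Chasles (FF g h) 0 (x-1) x); try apply ex_RInt_cont, FFc; auto.
  unfold plus; simpl. generalize (RInt (FF g h) (x - 1) x) (RInt (FF g h) 0 (x - 1)). change (forall a b : R, a = Rplus b a - b). intros a b. ring.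
Qed.

Lemma L5 g h x (gc : forall x, continuous g x) (hpos : 0 < h) :
  is_derive (II g h) x (FF g h x - FF g h (x-1)).
Proof.
  apply (is_derive_ext (fun y => RInt (FF g h) 0 y - RInt (FF g h) 0 (y-1))).
  { intros; symmetry; apply L4; auto. }
  apply (is_derive_minus (fun y => RInt (FF g h) 0 y) (fun y => RInt (FF g h) 0 (y-1))).
  - apply deriv_RInt, FFc; auto.
  - replace (FF g h (x-1)) with (scal 1 (FF g h (x-1))).
    2:{ unfold scal; simpl; unfold mult; simpl. ring. }
    apply (is_derive_comp (RInt (FF g h) 0) (fun y => y - 1)).
    + apply deriv_RInt, FFc; auto.
    + auto_derive; auto; ring.
Qed.

Lemma L6 g h x (gc : forall x, continuous g x) (gp : periodic1 g) (hpos : 0 < h) :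
  FF g h (x-1) = FF g h x * exp (- GG g 1 / h).
Proof.
  unfold FF. rewrite <- exp_plus. f_equal.
  replace x with ((x - 1) + 1) at 2 by ring. rewrite L2; auto. field. lra.
Qed.

Lemma L7 g h x (gc : forall x, continuous g x) (gp : periodic1 g) (hpos : 0 < h) :
  is_derive (rho g h) x (- g x / h * rho g h x + (1 - exp (- GG g 1 / h))).
Proof.
  unfold rho.
  eapply is_derive_ext. { intros t. reflexivity. }
  replace (- g x / h * (exp (- GG g x / h) * II g h x) + (1 - exp (- GG g 1 / h)))
   with ((- g x / h * exp (- GG g x / h)) * II g h x + exp (- GG g x / h) * (FF g h x - FF g h (x-1))).
  - apply (is_derive_mult (fun y => exp (- GG g y / h)) (II g h)).
    + apply L3'; auto.
    + apply L5; auto.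
    + intros; unfold mult; simpl; ring.
  - rewrite L6; auto. unfold FF.
    replace (exp (- GG g x / h) * (exp (GG g x / h) - exp (GG g x / h) * exp (- GG g 1 / h)))
     with ((exp (- GG g x / h) * exp (GG g x / h)) * (1 - exp (- GG g 1 / h))) by ring.
    rewrite <- exp_plus. replace (- GG g x / h + GG g x / h) with 0 by (field; lra).
    rewrite exp_0. ring.
Qed.

Lemma exp_le' a b : a <= b -> exp a <= exp b.
Proof. intros [H|H]. left; apply exp_increasing; auto. subst; lra. Qed.

Lemma L8 g h x (gc : forall x, continuous g x) (gp : periodic1 g) (hpos : 0 < h) :
  rho g h (x+1) = rho g h x.
Proof.
  assert (HI : II g h (x+1) = exp (GG g 1 / h) * II g h x).
  { unfold II. replace (x + 1 - 1) with (1*(x-1)+1) by ring. replace (x+1) with (1*x+1) by ring.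
    rewrite <- RInt_comp_lin. 2: apply ex_RInt_cont, FFc; auto.
    rewrite <- (RInt_scal (V:=R_CompleteNormedModule)). 2: apply ex_RInt_cont, FFc; auto.
    apply RInt_ext. intros y _. unfold scal; simpl; unfold mult; simpl.
    unfold FF. replace (1*y+1) with (y+1) by ring. rewrite L2; auto.
    rewrite <- exp_plus, Rmult_1_l. f_equal. field. lra. }
  unfold rho. rewrite HI, L2; auto.
  replace (exp (- (GG g x + GG g 1) / h) * (exp (GG g 1 / h) * II g h x))
   with ((exp (- (GG g x + GG g 1) / h) * exp (GG g 1 / h)) * II g h x) by ring.
  rewrite <- exp_plus. f_equal. f_equal. field. lra.
Qed.

Lemma rho_repr g h x (gc : forall x, continuous g x) (hpos : 0 < h) :
  rho g h x = RInt (fun y => exp ((GG g y - GG g x) / h)) (x-1) x.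
Proof.
  unfold rho, II.
  rewrite <- (RInt_scal (V:=R_CompleteNormedModule)). 2: apply ex_RInt_cont, FFc; auto.
  apply RInt_ext. intros y _. unfold scal; simpl; unfold mult; simpl.
  unfold FF. rewrite <- exp_plus. f_equal. field. lra.
Qed.

Lemma GG_bounds g m M x y (gc : forall x, continuous g x) (gb : forall x, m <= g x <= M) :
  y <= x -> m * (x - y) <= GG g x - GG g y <= M * (x - y).
Proof.
  intros Hyx.
  assert (E : GG g x - GG g y = RInt g y x).
  { unfold GG. rewrite <- (RInt_Chasles g 0 y x); try apply ex_RInt_cont, gc.
    unfold plus; simpl. generalize (RInt g 0 y) (RInt g y x).
    change (forall a b : R, Rplus a b - a = b). intros; ring. }
  rewrite E. split.
  - replace (m * (x - y)) with (RInt (fun _ => m) y x).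
    2:{ rewrite RInt_const. unfold scal; simpl; unfold mult; simpl. ring. }
    apply RInt_le; auto. apply ex_RInt_const. apply ex_RInt_cont, gc. intros; apply gb.
  - replace (M * (x - y)) with (RInt (fun _ => M) y x).
    2:{ rewrite RInt_const. unfold scal; simpl; unfold mult; simpl. ring. }
    apply RInt_le; auto. apply ex_RInt_cont, gc. apply ex_RInt_const. intros; apply gb.
Qed.

Lemma exp_int a x : 0 < a -> RInt (fun y => exp (- a * (x - y))) (x-1) x = (1 - exp (- a)) / a.
Proof.
  intros Ha.
  apply is_RInt_unique.
  replace ((1 - exp (- a)) / a) with (minus ((fun y => exp (- a * (x - y)) / a) x) ((fun y => exp (- a * (x - y)) / a) (x-1))).
  2:{ unfold minus, plus, opp; simpl. replace (x - x) with 0 by ring. replace (x - (x-1)) with 1 by ring.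
      rewrite Rmult_0_r, Rmult_1_r, exp_0. field. lra. }
  apply (is_RInt_derive (V:=R_CompleteNormedModule) (fun y => exp (- a * (x - y)) / a)).
  - intros y _. auto_derive. auto. unfold Rminus. field. lra.
  - intros y _. apply (ex_derive_continuous (K:=R_AbsRing) (V:=R_NormedModule)). auto_derive. auto.
Qed.

Lemma GG_ex_derive g (gc : forall x, continuous g x) x : ex_derive (GG g) x.
Proof. eexists; apply L1; auto. Qed.

Lemma integrand_cont g h x (gc : forall x, continuous g x) y :
  continuous (fun y => exp ((GG g y - GG g x) / h)) y.
Proof.
  apply (ex_derive_continuous (K:=R_AbsRing) (V:=R_NormedModule)).
  auto_derive. apply GG_ex_derive; auto.
Qed.

Lemma exp_m1 : exp (- (1)) < / 2.
Proof.
  rewrite exp_Ropp. assert (H := exp_ineq1 1 ltac:(lra)).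
  apply Rinv_lt_contravar; lra.
Qed.

Lemma rho_bounds g m M h x (gc : forall x, continuous g x) (gb : forall x, m <= g x <= M)
  (mpos : 0 < m) (hpos : 0 < h) (hM : h <= M) :
  h / (2 * M) <= rho g h x <= h / m.
Proof.
  assert (Mpos : 0 < M) by lra.
  rewrite rho_repr; auto.
  assert (Hex : ex_RInt (fun y => exp ((GG g y - GG g x) / h)) (x-1) x).
  { apply ex_RInt_cont. intros; apply integrand_cont; auto. }
  split.
  - apply Rle_trans with (RInt (fun y => exp (- (M/h) * (x - y))) (x-1) x).
    + rewrite exp_int. 2: apply Rdiv_lt_0_compat; lra.
      assert (exp (- (M/h)) <= exp (- (1))).
      { apply exp_le'. apply Ropp_le_contravar. apply Rle_div_r; auto. lra. }
      assert (H2 := exp_m1).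
      replace ((1 - exp (- (M / h))) / (M / h)) with ((1 - exp (- (M / h))) * (h / M)) by (field; lra).
      replace (h / (2 * M)) with (/2 * (h/M)) by (field; lra).
      apply Rmult_le_compat_r. apply Rlt_le, Rdiv_lt_0_compat; lra. lra.
    + apply RInt_le; auto. lra.
      apply ex_RInt_cont. intros; apply (ex_derive_continuous (K:=R_AbsRing) (V:=R_NormedModule)). auto_derive. auto.
      intros y Hy. apply exp_le'. destruct (GG_bounds g m M x y gc gb) as [_ H]. lra.
      apply Rle_trans with (- (M * (x - y)) / h). apply Req_le. field. lra.
      unfold Rdiv. apply Rmult_le_compat_r. apply Rlt_le, Rinv_0_lt_compat; auto. lra.
  - apply Rle_trans with (RInt (fun y => exp (- (m/h) * (x - y))) (x-1) x).
    + apply RInt_le; auto. lra.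
      apply ex_RInt_cont. intros; apply (ex_derive_continuous (K:=R_AbsRing) (V:=R_NormedModule)). auto_derive. auto.
      intros y Hy. apply exp_le'. destruct (GG_bounds g m M x y gc gb) as [H _]. lra.
      apply Rle_trans with (- (m * (x - y)) / h).
      unfold Rdiv. apply Rmult_le_compat_r. apply Rlt_le, Rinv_0_lt_compat; auto. lra.
      apply Req_le. field. lra.
    + rewrite exp_int. 2: apply Rdiv_lt_0_compat; lra.
      replace ((1 - exp (- (m / h))) / (m / h)) with ((1 - exp (- (m / h))) * (h / m)) by (field; lra).
      replace (h / m) with (1 * (h/m)) at 2 by ring.
      apply Rmult_le_compat_r. apply Rlt_le, Rdiv_lt_0_compat; lra.
      assert (0 < exp (- (m/h))) by apply exp_pos. lra.
Qed.

Lemma ratio_lo a r Z b : 0 < a -> a <= r -> 0 < Z -> Z <= b -> a / b <= r / Z.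
Proof.
  intros. unfold Rdiv. apply Rle_trans with (a * / Z).
  apply Rmult_le_compat_l. lra. apply Rinv_le_contravar; auto.
  apply Rmult_le_compat_r. apply Rlt_le, Rinv_0_lt_compat; auto. auto.
Qed.

Lemma ratio_hi a r Z b : 0 <= r -> r <= a -> 0 < b -> b <= Z -> r / Z <= a / b.
Proof.
  intros. unfold Rdiv. apply Rle_trans with (r * / b).
  apply Rmult_le_compat_l. lra. apply Rinv_le_contravar; auto.
  apply Rmult_le_compat_r. apply Rlt_le, Rinv_0_lt_compat; auto. auto.
Qed.

Lemma core (g : R -> R) (m M h : R) :
  (forall x, ex_derive g x) -> periodic1 g -> (forall x, m <= g x <= M) -> 0 < m -> 0 < h -> h <= M ->
  exists sigma : R -> R,
    periodic1 sigma /\ (forall x, 0 <= sigma x) /\ RInt sigma (-(1/2)) (1/2) = 1 /\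
    (forall x, ex_derive sigma x /\ ex_derive (Derive sigma) x) /\
    (forall x, Derive (fun y => g y * sigma y) x + h * Derive_n sigma 2 x = 0) /\
    (forall x, m / (2 * M) <= sigma x <= 2 * M / m).
Proof.
  intros gd gp gb mpos hpos hM.
  assert (gc : forall x, continuous g x).
  { intros; apply (ex_derive_continuous (K:=R_AbsRing) (V:=R_NormedModule)); auto. }
  assert (Mpos : 0 < M) by lra.
  set (Cc := 1 - exp (- GG g 1 / h)).
  assert (rd : forall x, is_derive (rho g h) x (- g x / h * rho g h x + Cc)).
  { intros; apply L7; auto. }
  assert (rc : forall x, continuous (rho g h) x).
  { intros; apply (ex_derive_continuous (K:=R_AbsRing) (V:=R_NormedModule)). eexists; apply rd. }
  assert (rb : forall x, h / (2 * M) <= rho g h x <= h / m).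
  { intros; apply rho_bounds; auto. }
  destruct (exist (fun Z : R => Z = RInt (rho g h) (-(1/2)) (1/2)) _ eq_refl) as [Z HZ].
  assert (ZB : h / (2 * M) <= Z <= h / m).
  { rewrite HZ. split.
    - replace (h / (2 * M)) with (RInt (fun _ => h / (2 * M)) (-(1/2)) (1/2)).
      2:{ rewrite RInt_const. unfold scal; simpl; unfold mult; simpl. field. lra. }
      apply RInt_le. lra. apply ex_RInt_const. apply ex_RInt_cont; auto.
      intros; apply rb.
    - replace (h / m) with (RInt (fun _ => h / m) (-(1/2)) (1/2)).
      2:{ rewrite RInt_const. unfold scal; simpl; unfold mult; simpl. field. lra. }
      apply RInt_le. lra. apply ex_RInt_cont; auto. apply ex_RInt_const. 
      intros; apply rb. }
  assert (Zpos : 0 < Z).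
  { apply Rlt_le_trans with (h / (2 * M)). apply Rdiv_lt_0_compat; lra. apply ZB. }
  set (sigma := fun x => rho g h x / Z).
  assert (sd : forall x, is_derive sigma x ((- g x / h * rho g h x + Cc) / Z)).
  { intros x. unfold sigma. 
    apply (is_derive_ext (fun y => scal (/Z) (rho g h y))).
    { intros; unfold scal; simpl; unfold mult; simpl. unfold Rdiv. ring. }
    replace ((- g x / h * rho g h x + Cc) / Z) with (scal (/Z) (- g x / h * rho g h x + Cc)).
    2:{ unfold scal; simpl; unfold mult; simpl. unfold Rdiv. ring. }
    apply is_derive_scal. apply rd. }
  assert (Dsig : forall x, Derive sigma x = (- g x / h * rho g h x + Cc) / Z).
  { intros; apply is_derive_unique, sd. }
  assert (dd : forall x, ex_derive (Derive sigma) x).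
  { intros x. apply (ex_derive_ext (fun y => (- g y / h * rho g h y + Cc) / Z)).
    { intros; symmetry; apply Dsig. }
    auto_derive. repeat split; auto. eexists; apply rd. }
  exists sigma. split; [|split; [|split; [|split; [|split]]]].
  - intros x. unfold sigma. rewrite L8; auto.
  - intros x. unfold sigma. apply Rlt_le, Rdiv_lt_0_compat; auto.
    apply Rlt_le_trans with (h / (2 * M)). apply Rdiv_lt_0_compat; lra. apply rb.
  - unfold sigma.
    rewrite (RInt_ext _ (fun x => scal (/Z) (rho g h x))).
    2:{ intros; unfold scal; simpl; unfold mult; simpl. unfold Rdiv. ring. }
    rewrite (RInt_scal (V:=R_CompleteNormedModule)). 2: apply ex_RInt_cont; auto.
    rewrite <- HZ. unfold scal; simpl; unfold mult; simpl. field. lra.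
  - intros x; split; auto. eexists; apply sd.
  - intros x.
    assert (E : forall y, g y * sigma y = h * Cc / Z - h * Derive sigma y).
    { intros y. rewrite Dsig. unfold sigma. field. lra. }
    rewrite (Derive_ext _ _ x E).
    change (Derive_n sigma 2 x) with (Derive (Derive sigma) x).
    rewrite Derive_minus. rewrite Derive_const. rewrite Derive_scal. ring.
    apply ex_derive_const. apply ex_derive_scal. auto.
  - intros x. unfold sigma. split.
    + replace (m / (2 * M)) with ((h / (2 * M)) / (h / m)) by (field; lra).
      apply ratio_lo; try apply rb; try apply ZB; auto. apply Rdiv_lt_0_compat; lra.
    + replace (2 * M / m) with ((h / m) / (h / (2 * M))) by (field; lra).
      apply ratio_hi; try apply rb; try apply ZB; auto.
      apply Rlt_le, Rlt_le_trans with (h / (2 * M)). apply Rdiv_lt_0_compat; lra. apply rb.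
      apply Rdiv_lt_0_compat; lra.
Qed.

Lemma per_nat f (fp : periodic1 f) n x : f (x + INR n) = f x.
Proof.
  induction n. simpl. rewrite Rplus_0_r; auto.
  rewrite S_INR. replace (x + (INR n + 1)) with ((x + INR n) + 1) by ring. rewrite fp; auto.
Qed.

Lemma per_Z f (fp : periodic1 f) (k : Z) x : f (x + IZR k) = f x.
Proof.
  destruct k as [|p|p].
  - simpl. rewrite Rplus_0_r; auto.
  - rewrite <- positive_nat_Z, <- INR_IZR_INZ. apply per_nat; auto.
  - replace (IZR (Z.neg p)) with (- INR (Pos.to_nat p)).
    2:{ rewrite INR_IZR_INZ, positive_nat_Z. rewrite <- Pos2Z.opp_pos, opp_IZR. auto. }
    rewrite <- (per_nat f fp (Pos.to_nat p) (x + - INR (Pos.to_nat p))). f_equal; ring.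
Qed.

Lemma per_reduce f (fp : periodic1 f) x : exists y, 0 <= y <= 1 /\ f x = f y.
Proof.
  destruct (archimed x) as [H1 H2].
  exists (x - IZR (up x) + 1). split. lra.
  rewrite <- (per_Z f fp (up x - 1) (x - IZR (up x) + 1)). f_equal.
  rewrite minus_IZR. ring.
Qed.

Lemma per_max f (fc : forall x, continuous f x) (fp : periodic1 f) : exists xM, forall x, f x <= f xM.
Proof.
  destruct (continuity_ab_maj f 0 1) as [xM [H _]]. lra.
  { intros; apply continuity_pt_filterlim, fc. }
  exists xM. intros x. destruct (per_reduce f fp x) as [y [Hy ->]]. auto.
Qed.

Lemma per_bounded f (fc : forall x, continuous f x) (fp : periodic1 f) : exists B, 0 <= B /\ forall x, Rabs (f x) <= B.
Proof.
  destruct (per_max f fc fp) as [a Ha].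
  destruct (per_max (fun x => - f x)) as [b Hb].
  { intros; apply (continuous_opp (K:=R_AbsRing) (V:=R_NormedModule) f). apply fc. }
  { intros x; simpl; rewrite fp; auto. }
  exists (Rabs (f a) + Rabs (f b)). split.
  apply Rplus_le_le_0_compat; apply Rabs_pos.
  intros x. specialize (Ha x). specialize (Hb x). simpl in Hb.
  apply Rabs_le. split.
  - assert (- Rabs (f b) <= f b) by (generalize (Rle_abs (- f b)); rewrite Rabs_Ropp; lra). assert (0 <= Rabs (f a)) by apply Rabs_pos. lra.
  - assert (f a <= Rabs (f a)) by apply Rle_abs. assert (0 <= Rabs (f b)) by apply Rabs_pos. lra.
Qed.

Lemma Derive_per f (fd : forall x, ex_derive f x) (fp : periodic1 f) : periodic1 (Derive f).
Proof.
  intros x. symmetry.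
  rewrite (Derive_ext f (fun t => f (t + 1)) x). 2:{ intros; symmetry; apply fp. }
  apply is_derive_unique.
  replace (Derive f (x+1)) with (scal 1 (Derive f (x+1))).
  2:{ unfold scal; simpl; unfold mult; simpl; ring. }
  apply (is_derive_comp f (fun t => t + 1)).
  apply Derive_correct, fd. auto_derive; auto.
Qed.

Lemma sum_ex_derive (D : nat -> R -> R) h n x : (forall j x, ex_derive (D j) x) ->
  ex_derive (fun y => sumR (fun j => h^j * D j y) n) x.
Proof.
  intros Hd. induction n.
  - simpl. apply ex_derive_const.
  - simpl. apply (ex_derive_plus (fun y => sumR (fun j => h^j * D j y) n) (fun y => h^n * D n y)); auto.
    apply ex_derive_scal. auto.
Qed.

Lemma sum_per (D : nat -> R -> R) h n : (forall j, periodic1 (D j)) ->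
  periodic1 (fun y => sumR (fun j => h^j * D j y) n).
Proof.
  intros Hp x. induction n; simpl; auto. rewrite IHn, Hp. auto.
Qed.

Lemma pow_le1 h n : 0 <= h <= 1 -> h ^ n <= 1.
Proof.
  intros H. induction n; simpl. lra.
  replace 1 with (1 * 1) by ring. apply Rmult_le_compat; try lra. apply pow_le; lra.
Qed.

Lemma sum_bound (D : nat -> R -> R) :
  (forall j, (1 <= j)%nat -> exists B, 0 <= B /\ forall x, Rabs (D j x) <= B) ->
  forall n, exists B, 0 <= B /\ forall h x, 0 < h <= 1 ->
    Rabs (sumR (fun j => h^j * D j x) (S n) - D 0%nat x) <= h * B.
Proof.
  intros HB n. induction n.
  - exists 0. split. lra. intros h x Hh. simpl.
    replace (0 + 1 * D 0%nat x - D 0%nat x) with 0 by ring. rewrite Rabs_R0. lra.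
  - destruct IHn as [B [B0 HBn]]. destruct (HB (S n)) as [B' [B'0 HB']]. lia.
    exists (B + B'). split. lra. intros h x Hh.
    change (sumR (fun j => h^j * D j x) (S (S n))) with (sumR (fun j => h^j * D j x) (S n) + h^(S n) * D (S n) x).
    replace (sumR (fun j => h^j * D j x) (S n) + h^(S n) * D (S n) x - D 0%nat x)
      with ((sumR (fun j => h^j * D j x) (S n) - D 0%nat x) + h^(S n) * D (S n) x) by ring.
    eapply Rle_trans. apply Rabs_triang.
    rewrite Rmult_plus_distr_l. apply Rplus_le_compat. apply HBn; auto.
    rewrite Rabs_mult. simpl (h ^ S n). rewrite Rabs_mult.
    rewrite (Rabs_pos_eq h) by lra. rewrite (Rabs_pos_eq (h^n)) by (apply pow_le; lra).
    rewrite Rmult_assoc. apply Rmult_le_compat_l. lra.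
    replace B' with (1 * B') by ring. apply Rmult_le_compat. apply pow_le; lra. apply Rabs_pos.
    apply pow_le1; lra. auto.
Qed.

Lemma pplus_deriv V c (Hc : forall x, V x < c) (Hd : forall x, ex_derive V x) x : ex_derive (pplus V c) x.
Proof. unfold pplus. auto_derive. split. auto. specialize (Hc x). lra. Qed.

Lemma v0_deriv V P c (Hc : forall x, V x < c) (Hd : forall x, ex_derive V x) x :
  Derive (v0 V P c) x = pplus V c x - P.
Proof.
  apply is_derive_unique. unfold v0.
  apply (is_derive_minus (fun y => RInt (pplus V c) (-(1/2)) y) (fun y => P * (y + 1/2))).
  - apply deriv_RInt. intros; apply (ex_derive_continuous (K:=R_AbsRing) (V:=R_NormedModule)), pplus_deriv; auto.
  - auto_derive; auto; ring.
Qed.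

Theorem mainTheorem4 (V : R -> R) (P c : R) (v : nat -> R -> R) (N : nat) :
  admissible_potential V ->
  is_Hbar V P c ->
  0 < P ->
  (forall x, V x < c) ->
  expansion_family V P c v ->
  exists h0 k K : R, 0 < h0 /\ 0 < k /\ 0 < K /\
    forall h : R, 0 < h < h0 ->
      exists sigma : R -> R,
        periodic1 sigma /\
        (forall x, 0 <= sigma x) /\
        RInt sigma (-(1/2)) (1/2) = 1 /\
        (forall x, ex_derive sigma x /\ ex_derive (Derive sigma) x) /\
        (forall x, Derive (fun y => gN P v N h y * sigma y) x
                   + h * Derive_n sigma 2 x = 0) /\
        (forall x, k <= sigma x <= K).
Proof.
  intros [Vs [Vp [_ [Vmin _]]]] _ Ppos Hc [Hv0 Hv].
  assert (Vd : forall x, ex_derive V x) by (intros x; exact (Vs 1%nat x)).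
  assert (Vc : forall x, continuous V x).
  { intros; apply (ex_derive_continuous (K:=R_AbsRing) (V:=R_NormedModule)); auto. }
  set (D := fun j => Derive (v j)).
  assert (D0 : forall x, D 0%nat x = pplus V c x - P).
  { intros x. unfold D. rewrite Hv0. apply v0_deriv; auto. }
  assert (Dd : forall j x, ex_derive (D j) x).
  { intros [|j] x.
    - apply (ex_derive_ext (fun y => pplus V c y - P)). { intros; symmetry; apply D0. }
      apply (ex_derive_minus (fun y => pplus V c y) (fun _ => P)). apply pplus_deriv; auto. apply ex_derive_const.
    - destruct (Hv (S j)) as [Hs _]. lia. exact (Hs 2%nat x). }
  assert (Dp : forall j, periodic1 (D j)).
  { intros [|j] x.
    - rewrite !D0. unfold pplus. rewrite Vp. auto.
    - destruct (Hv (S j)) as [Hs [Hp _]]. lia. unfold D. apply Derive_per; auto.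
      intros y; exact (Hs 1%nat y). }
  assert (Dc : forall j x, continuous (D j) x).
  { intros; apply (ex_derive_continuous (K:=R_AbsRing) (V:=R_NormedModule)); auto. }
  destruct (sum_bound D) with (n := N) as [B [B0 HB]].
  { intros j _. apply per_bounded; auto. }
  destruct (per_max V Vc Vp) as [xM HxM].
  set (m0 := pplus V c xM). set (M0 := pplus V c 0).
  assert (m0pos : 0 < m0). { unfold m0, pplus. apply sqrt_lt_R0. specialize (Hc xM). lra. }
  assert (pb : forall x, m0 <= pplus V c x <= M0).
  { intros x. unfold m0, M0, pplus. split; apply sqrt_le_1_alt.
    specialize (HxM x); lra. specialize (Vmin x); lra. }
  assert (M0m0 : m0 <= M0) by apply (pb 0).
  set (m := m0 / 2). set (M := M0 + m0 / 2).
  exists (Rmin 1 (Rmin (m0 / (2 * (B + 1))) M)), (m / (2 * M)), (2 * M / m).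
  assert (mpos : 0 < m) by (unfold m; lra).
  assert (Mpos : 0 < M) by (unfold M; lra).
  split. { apply Rmin_glb_lt. lra. apply Rmin_glb_lt. apply Rdiv_lt_0_compat; lra. lra. }
  split. { apply Rdiv_lt_0_compat; lra. }
  split. { apply Rdiv_lt_0_compat; lra. }
  intros h [hpos hlt].
  assert (h1 : h <= 1). { left; eapply Rlt_le_trans. apply hlt. apply Rmin_l. }
  assert (h2 : h <= m0 / (2 * (B + 1))).
  { left; eapply Rlt_le_trans. apply hlt. eapply Rle_trans. apply Rmin_r. apply Rmin_l. }
  assert (h3 : h <= M).
  { left; eapply Rlt_le_trans. apply hlt. eapply Rle_trans. apply Rmin_r. apply Rmin_r. }
  assert (hB : h * B <= m0 / 2).
  { apply Rle_trans with (h * (B + 1)). apply Rmult_le_compat_l; lra.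
    apply Rle_trans with (m0 / (2 * (B + 1)) * (B + 1)). apply Rmult_le_compat_r; lra.
    right. field. lra. }
  apply core.
  - intros x. unfold gN.
    apply (ex_derive_plus (fun _ => P) (fun y => sumR (fun j => h ^ j * Derive (v j) y) (S N))).
    apply ex_derive_const. apply (sum_ex_derive D); auto.
  - intros x. unfold gN. f_equal. apply (sum_per D h (S N) Dp x).
  - intros x. unfold gN.
    specialize (HB h x (conj hpos h1)). fold D in HB |- *.
    change (sumR (fun j => h ^ j * Derive (v j) x) (S N)) with (sumR (fun j => h ^ j * D j x) (S N)).
    rewrite D0 in HB. apply Rabs_le_between in HB.
    specialize (pb x). unfold m, M. lra.
  - auto.
  - auto.
  - auto.
Qed.
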